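(* Let $f:\mathbb{R}^n\to\mathbb{R}$ be differentiable, $L$-smooth and $m$-strongly convex with $m>0$, and let $x_*$ be the unique point with $\nabla f(x_* )=0$. Let $0<\mu<2$, $\delta>0$, $\alpha>0$, $\eta>0$ and constants $0<c_1\le c_2<+\infty$. Consider the AFOAGD iteration $$x_{k+1}=y_k-\alpha\,\nabla f(y_k)\,\beta_k\,(\|y_k-y_{k-1}\|_2+\delta)^{1-\mu},\qquad y_k=x_k+\eta(x_k-x_{k-1}),$$ where the scalars $\beta_k>0$ satisfy $0<c_1\le \beta_k(\|y_k-y_{k-1}\|_2+\delta)^{1-\mu}\le c_2<+\infty$ for all $k$. Set $u_k=\nabla f(y_k)\,\beta_k(\|y_k-y_{k-1}\|_2+\delta)^{1-\mu}$, $u_*=0$, and $e_k=[(x_{k-1}-x_* )^\top,(x_k-x_* )^\top,(u_k-u_* )^\top]^\top\in\mathbb{R}^{3n}$. Let $\psi:\mathbb{R}\to\mathbb{R}$ be given by $\psi(s)=1$ if $s\ge 0$ and $\psi(s)=0$ otherwise, and write $\psi_k=\psi\big(\nabla f(y_k)^\top(y_k-x_k)\big)$. Then for all trajectories and all $k$, $$f(x_{k+1})-f(x_k)\le e_k^\top N^2 e_k,$$ where $$N^2=\psi_k\begin{bmatrix}-\frac{\eta^2 m}{2}I_n & \frac{\eta^2 m}{2}I_n & -\frac{\eta}{2c_1}I_n\\ \frac{\eta^2 m}{2}I_n & -\frac{\eta^2 m}{2}I_n & \frac{\eta}{2c_1}I_n\\ -\frac{\eta}{2c_1}I_n & \frac{\eta}{2c_1}I_n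 & \left(\frac12\alpha^2L-\frac{\alpha}{c_2}\right)I_n\end{bmatrix}+(1-\psi_k)\begin{bmatrix}-\frac{\eta^2 m}{2}I_n & \frac{\eta^2 m}{2}I_n & -\frac{\eta}{2c_2}I_n\\ \frac{\eta^2 m}{2}I_n & -\frac{\eta^2 m}{2}I_n & \frac{\eta}{2c_2}I_n\\ -\frac{\eta}{2c_2}I_n & \frac{\eta}{2c_2}I_n & \left(\frac12\alpha^2L-\frac{\alpha}{c_2}\right)I_n\end{bmatrix}.$$
   Context: A differentiable $f$ is $L$-smooth if $\|\nabla f(x)-\nabla f(y)\|_2\le L\|x-y\|_2$ for all $x,y$, and $m$-strongly convex if $m\|x-y\|_2^2\le (x-y)^\top(\nabla f(x)-\nabla f(y))$ for all $x,y$. $I_n$ is the $n\times n$ identity matrix. *)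

(* Defs.v *)
From HB Require Import structures.
From mathcomp Require Import all_boot all_order all_algebra.
From mathcomp Require Import all_classical all_reals all_analysis.
Set Implicit Arguments. Unset Strict Implicit. Unset Printing Implicit Defensive.
Import Order.TTheory GRing.Theory Num.Theory.
Import numFieldNormedType.Exports.
Local Open Scope ring_scope.

Section Defs.
Context {R : realType} {n : nat}.

Definition dotv (u v : 'cV[R]_n) : R := (u^T *m v) 0 0.
Definition norm2 (v : 'cV[R]_n) : R := Num.sqrt (dotv v v).

Definition grad (f : 'cV[R]_n -> R) (x : 'cV[R]_n) : 'cV[R]_n :=
  \col_i ('d f x (delta_mx i 0 : 'cV[R]_n)).

Definition L_smooth (f : 'cV[R]_n -> R) (L : R) : Prop :=
  forall x y, norm2 (grad f x - grad f y) <= L * norm2 (x - y).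

Definition strongly_convex (f : 'cV[R]_n -> R) (m : R) : Prop :=
  forall x y, m * norm2 (x - y) ^+ 2 <= dotv (x - y) (grad f x - grad f y).

(* 3x3 block matrix with scalar multiples of I_n as blocks *)
Definition blk3 (a b c d e f g h i : R) : 'M[R]_(n + (n + n)) :=
  block_mx a%:M (row_mx b%:M c%:M) (col_mx d%:M g%:M)
           (block_mx e%:M f%:M h%:M i%:M).

Definition quadf (M : 'M[R]_(n + (n + n))) (e : 'cV[R]_(n + (n + n))) : R :=
  (e^T *m M *m e) 0 0.

Definition stack3 (a b c : 'cV[R]_n) : 'cV[R]_(n + (n + n)) :=
  col_mx a (col_mx b c).

End Defs.

Definition psi {R : realType} (s : R) : R := if 0 <= s then 1 else 0.

(* Main.v *)
Require Import Defs.
From HB Require Import structures.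
From mathcomp Require Import all_boot all_order all_algebra.
From mathcomp Require Import all_classical all_reals all_analysis.
From mathcomp Require Import ring lra.
Import Order.TTheory GRing.Theory Num.Theory.
Import numFieldNormedType.Exports.
Local Open Scope ring_scope.

Section Dot.
Context {R : realType} {n : nat}.
Implicit Types u v w : 'cV[R]_n.

Lemma dotvE u v : dotv u v = \sum_i u i 0 * v i 0.
Proof. by rewrite /dotv mxE; apply: eq_bigr => i _; rewrite mxE. Qed.

Lemma dotvC u v : dotv u v = dotv v u.
Proof. by rewrite !dotvE; apply: eq_bigr => i _; rewrite mulrC. Qed.

Lemma dotvDl u v w : dotv (u + v) w = dotv u w + dotv v w.
Proof. by rewrite !dotvE -big_split; apply: eq_bigr => i _; rewrite !mxE mulrDl. Qed.

Lemma dotvNl u w : dotv (- u) w = - dotv u w.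
Proof. by rewrite !dotvE -sumrN; apply: eq_bigr => i _; rewrite !mxE mulNr. Qed.

Lemma dotvZl a u w : dotv (a *: u) w = a * dotv u w.
Proof. by rewrite !dotvE mulr_sumr; apply: eq_bigr => i _; rewrite !mxE mulrA. Qed.

Lemma dotvBl u v w : dotv (u - v) w = dotv u w - dotv v w.
Proof. by rewrite dotvDl dotvNl. Qed.

Lemma dotvDr u v w : dotv w (u + v) = dotv w u + dotv w v.
Proof. by rewrite dotvC dotvDl !(dotvC w). Qed.
Lemma dotvNr u w : dotv w (- u) = - dotv w u.
Proof. by rewrite dotvC dotvNl dotvC. Qed.
Lemma dotvBr u v w : dotv w (u - v) = dotv w u - dotv w v.
Proof. by rewrite dotvC dotvBl !(dotvC w). Qed.
Lemma dotvZr a u w : dotv w (a *: u) = a * dotv w u.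
Proof. by rewrite dotvC dotvZl dotvC. Qed.
Lemma dotv0l w : dotv 0 w = 0.
Proof. by rewrite -(scale0r (0 : 'cV[R]_n)) dotvZl mul0r. Qed.
Lemma dotv0r w : dotv w 0 = 0.
Proof. by rewrite dotvC dotv0l. Qed.

Lemma dotv_ge0 u : 0 <= dotv u u.
Proof. by rewrite dotvE; apply: sumr_ge0 => i _; rewrite -expr2 sqr_ge0. Qed.

Lemma dotv_eq0 u : dotv u u = 0 -> u = 0.
Proof.
rewrite dotvE => /eqP; rewrite psumr_eq0; last by move=> i _; rewrite -expr2 sqr_ge0.
move=> /allP H; apply/matrixP => i j; rewrite (ord1 j) mxE.
by have := H i (mem_index_enum _); rewrite /= mulf_eq0 orbb => /eqP.
Qed.

Lemma norm2_sq u : norm2 u ^+ 2 = dotv u u.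
Proof. by rewrite /norm2 sqr_sqrtr // dotv_ge0. Qed.

Lemma norm2_ge0 u : 0 <= norm2 u.
Proof. exact: sqrtr_ge0. Qed.

Lemma CS u v : dotv u v <= norm2 u * norm2 v.
Proof.
have [->|u0] := eqVneq u 0; first by rewrite dotv0l mulr_ge0 // norm2_ge0.
have [->|v0] := eqVneq v 0; first by rewrite dotv0r mulr_ge0 // norm2_ge0.
set A := norm2 u; set B := norm2 v.
have Ap : 0 < A.
  rewrite lt_neqAle norm2_ge0 andbT eq_sym; apply/negP => /eqP A0.
  have : u = 0 by apply: dotv_eq0; rewrite -norm2_sq -/A A0 expr2 mulr0.
  by move/eqP: u0.
have Bp : 0 < B.
  rewrite lt_neqAle norm2_ge0 andbT eq_sym; apply/negP => /eqP B0.
  have : v = 0 by apply: dotv_eq0; rewrite -norm2_sq -/B B0 expr2 mulr0.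
  by move/eqP: v0.
have H := dotv_ge0 (B *: u - A *: v).
rewrite !dotvBl !dotvBr in H. rewrite !dotvZl !dotvZr in H. rewrite -!norm2_sq -/A -/B (dotvC v u) in H.
have : 0 <= 2 * A * B * (A * B - dotv u v) by lra.
rewrite pmulr_rge0 ?subr_ge0 // mulr_gt0 // mulr_gt0 //.
Qed.

End Dot.

Section An.
Context {R : realType} {n : nat}.
Local Open Scope classical_set_scope.

Lemma diff_grad (f : 'cV[R]_n -> R) a v : 'd f a v = dotv (grad f a) v.
Proof.
rewrite dotvE.
have -> : v = \sum_i v i 0 *: (delta_mx i 0 : 'cV[R]_n).
  apply/matrixP => i j; rewrite (ord1 j) summxE (bigD1 i) //= big1 ?addr0.
    by rewrite !mxE !eqxx mulr1.
  by move=> k /negbTE ki; rewrite !mxE eq_sym ki mulr0.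
rewrite linear_sum; apply: eq_bigr => i _.
rewrite linearZ /= mulrC; congr (_ * _); last by rewrite /grad mxE.
rewrite summxE (bigD1 i) //= big1 ?addr0; first by rewrite !mxE !eqxx mulr1.
by move=> k /negbTE ki; rewrite !mxE eq_sym ki mulr0.
Qed.

Lemma phi_derive (f : 'cV[R]_n -> R) (x v : 'cV[R]_n) (t : R) :
  (forall z, differentiable f z) ->
  is_derive t 1 (fun t : R => f (x + t *: v)) (dotv (grad f (x + t *: v)) v).
Proof.
move=> df.
have E : (fun t : R => f (x + t *: v)) = f \o (cst x + *:%R ^~ v).
  by rewrite funeqE.
have hd : is_diff (x + t *: v) f ('d f (x + t *: v)).
  by apply: DiffDef; [exact: df|].
have hg : is_diff t (cst x + *:%R ^~ v) (0 + *:%R ^~ v) by exact: is_diffD.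
have hc := is_diff_comp hg hd.
rewrite E -diff_grad.
have dc : differentiable (f \o (cst x + *:%R ^~ v)) t by apply: ex_diff.
apply: DeriveDef; first exact: diff_derivable.
by rewrite deriveE // diff_val /= add0r scale1r.
Qed.

Lemma oneD (phi dphi : R -> R) (K : R) :
  (forall t : R, is_derive t 1 phi (dphi t)) ->
  (forall t, 0 < t < 1 -> dphi t - dphi 0 <= K * t) ->
  phi 1 - phi 0 - dphi 0 <= K / 2.
Proof.
move=> dp hK.
pose h := fun t : R => phi t - (dphi 0 * t + K / 2 * (t * t)).
have dh : forall t : R, is_derive t 1 h (dphi t - (dphi 0 + K * t)).
  move=> t.
  have H1 : is_derive t 1 (dphi 0 \*: (id : R -> R)) (dphi 0 *: 1) :=
    is_deriveZ _ (is_derive_id t 1).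
  have H2 : is_derive t 1 ((id : R -> R) * id) (id t *: 1 + id t *: 1) :=
    is_deriveM (is_derive_id t 1) (is_derive_id t 1).
  have H3 := is_deriveZ (K / 2) H2.
  have H := is_deriveB (dp t) (is_deriveD H1 H3).
  have -> : h = phi - (dphi 0 \*: (id : R -> R) + (K / 2) \*: ((id : R -> R) * id)).
    by rewrite funeqE => s; rewrite /h /=.
  apply: (is_derive_eq H).
  rewrite /= !scaler1 -mulr2n; congr (_ - (_ + _)).
  change ((K/2) *: (t *+ 2)) with ((K/2) * (t *+ 2)); rewrite -[t *+ 2]mulr_natr; by field.
have ch : {within `[0, 1], continuous h}.
  apply: derivable_within_continuous => t _.
  exact: (@ex_derive _ _ _ _ _ _ _ (dh t)).
have [c cI E] := MVT ltr01 (fun t _ => dh t) ch.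
move: cI; rewrite in_itv /= => /andP[c0 c1].
move: E; rewrite /h subr0 mulr1 !mulr0 addr0 !mulr1 subr0 => E.
have := hK c; rewrite c0 c1 /= => /(_ isT) Hc.
lra.
Qed.
End An.

Section Desc.
Context {R : realType} {n : nat}.

Lemma norm2Z (t : R) (v : 'cV[R]_n) : 0 <= t -> norm2 (t *: v) = t * norm2 v.
Proof.
move=> t0; rewrite /norm2 dotvZl dotvZr mulrA -expr2 sqrtrM ?sqr_ge0 //.
by rewrite sqrtr_sqr ger0_norm.
Qed.

Lemma descent (f : 'cV[R]_n -> R) L x v :
  (forall z, differentiable f z) -> L_smooth f L ->
  f (x + v) - f x - dotv (grad f x) v <= L / 2 * dotv v v.
Proof.
move=> df Ls.
have := @oneD R (fun t => f (x + t *: v)) (fun t => dotv (grad f (x + t *: v)) v)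
  (L * dotv v v) (fun t => phi_derive f x v t df).
rewrite scale1r !scale0r !addr0 [L * dotv v v / 2]mulrAC; apply => t /andP[t0 t1].
rewrite -dotvBl; apply: (le_trans (CS (grad f (x + t *: v) - grad f x) v)).
have E : x + t *: v - x = t *: v by rewrite addrC addKr.
have H : norm2 (grad f (x + t *: v) - grad f x) <= L * (t * norm2 v).
  by have := Ls (x + t *: v) x; rewrite E (norm2Z t v (ltW t0)).
apply: (le_trans (ler_wpM2r (norm2_ge0 v) H)).
by rewrite -norm2_sq le_eqVlt; apply/orP; left; apply/eqP; ring.
Qed.

Lemma sconv (f : 'cV[R]_n -> R) m x v :
  (forall z, differentiable f z) -> strongly_convex f m ->
  m / 2 * dotv v v <= f (x + v) - f x - dotv (grad f x) v.
Proof.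
move=> df Sc.
have := @oneD R (fun t => - f (x + t *: v)) (fun t => - dotv (grad f (x + t *: v)) v)
  (- (m * dotv v v)) (fun t => is_deriveN (phi_derive f x v t df)).
rewrite scale1r !scale0r !addr0 => H.
suff /H HH : (forall t : R, 0 < t < 1 -> - dotv (grad f (x + t *: v)) v - - dotv (grad f x) v <= - (m * dotv v v) * t) by lra.
move=> t /andP[t0 t1].
have E : x + t *: v - x = t *: v by rewrite addrC addKr.
have := Sc (x + t *: v) x; rewrite E (norm2Z t v (ltW t0)).
rewrite (dotvZl t v) exprMn norm2_sq => Hs.
have Hs2 : t * (m * dotv v v * t) <= t * dotv v (grad f (x + t *: v) - grad f x).
  have -> : t * (m * dotv v v * t) = m * (t ^+ 2 * dotv v v) by ring.
  exact: Hs.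
have : m * dotv v v * t <= dotv v (grad f (x + t *: v) - grad f x).
  by rewrite -(ler_pM2l t0).
move=> H2.
have e1 := dotvBr (grad f (x + t *: v)) (grad f x) v.
have e2 := dotvC v (grad f (x + t *: v)).
have e3 := dotvC v (grad f x).
clear Hs Hs2 E.
move: H2 e1 e2 e3.
generalize (dotv v (grad f (x + t *: v) - grad f x)) (dotv v (grad f (x + t *: v))) (dotv v (grad f x)) (dotv (grad f (x + t *: v)) v) (dotv (grad f x) v) (dotv v v).
move=> a b c d e D H2 e1 e2 e3.
clear H; lra.
Qed.
End Desc.

Section Q.
Context {R : realType} {n : nat}.

Lemma e00D (M N : 'M[R]_1) : (M + N) 0 0 = M 0 0 + N 0 0.
Proof. by rewrite mxE. Qed.
Lemma e00Z k (M : 'M[R]_1) : (k *: M) 0 0 = k * M 0 0.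
Proof. by rewrite mxE. Qed.

Lemma quad_blk (A B C D E F G H I : R) (a b c : 'cV[R]_n) :
 quadf (blk3 A B C D E F G H I) (stack3 a b c) =
   A * dotv a a + B * dotv a b + C * dotv a c
 + D * dotv b a + E * dotv b b + F * dotv b c
 + G * dotv c a + H * dotv c b + I * dotv c c.
Proof.
rewrite /quadf /blk3 /stack3 !tr_col_mx mul_row_block mul_row_col mul_mx_row.
rewrite mul_row_block !mul_row_col !mul_mx_scalar !mulmxDl -!scalemxAl.
rewrite !e00D !e00Z !mul_row_col !mulmxDl -!scalemxAl !e00D !e00Z.
rewrite /dotv.
ring.
Qed.

Lemma quadfD (M N : 'M[R]_(n + (n + n))) e : quadf (M + N) e = quadf M e + quadf N e.
Proof. by rewrite /quadf mulmxDr mulmxDl e00D. Qed.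

Lemma quadfZ k (M : 'M[R]_(n + (n + n))) e : quadf (k *: M) e = k * quadf M e.
Proof. by rewrite /quadf -scalemxAr -scalemxAl e00Z. Qed.

Lemma quad_sym (a c q : R) (a1 a2 a3 : 'cV[R]_n) :
  quadf (blk3 (- a) a (- c) a (- a) c (- c) c q) (stack3 a1 a2 a3) =
  - a * dotv (a2 - a1) (a2 - a1) + 2 * c * dotv (a2 - a1) a3 + q * dotv a3 a3.
Proof.
rewrite quad_blk dotvBl dotvBl dotvBr dotvBr.
rewrite (dotvC a2 a1) (dotvC a3 a1) (dotvC a3 a2).
generalize (dotv a1 a1) (dotv a1 a2) (dotv a1 a3) (dotv a2 a2) (dotv a2 a3) (dotv a3 a3).
move=> z1 z2 z3 z4 z5 z6; ring.
Qed.
End Q.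

Lemma arith (R : realFieldType) (fx1 fy fxk alpha s G L eta T m Dd c1 c2 p a q DU UU
   DG1 DV1 DW DG2 : R) :
 0 < alpha -> 0 < eta -> 0 < c1 -> c1 <= c2 -> c1 <= s -> s <= c2 -> 0 <= G ->
 a = eta ^+ 2 * m / 2 -> q = alpha ^+ 2 * L / 2 - alpha / c2 ->
 DU = s * T -> UU = s * (s * G) ->
 DG1 = - (alpha * (s * G)) -> DV1 = alpha * (alpha * (s * (s * G))) ->
 DW = eta * (eta * Dd) -> DG2 = - (eta * T) ->
 fx1 - fy - DG1 <= L / 2 * DV1 ->
 m / 2 * DW <= fxk - fy - DG2 ->
 (p = 1 /\ 0 <= eta * T) \/ (p = 0 /\ eta * T < 0) ->
 fx1 - fxk <= p * (- a * Dd + 2 * (eta / (2 * c1)) * DU + q * UU)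
            + (1 - p) * (- a * Dd + 2 * (eta / (2 * c2)) * DU + q * UU).
Proof.
move=> a0 e0 c10 c12 c1s sc2 G0 -> -> -> -> -> -> -> -> hD hS hp.
have c20 : 0 < c2 by apply: lt_le_trans c12.
have s0 : 0 < s by apply: lt_le_trans c1s.
have a0' := ltW a0; have e0' := ltW e0; have s0' := ltW s0; have c10' := ltW c10; have c20' := ltW c20.
have ic1 : 0 <= c1^-1 by rewrite invr_ge0.
have ic2 : 0 <= c2^-1 by rewrite invr_ge0.
have sc1 : 0 <= s - c1 by rewrite subr_ge0.
have sc2' : 0 <= c2 - s by rewrite subr_ge0.
have F1 : 0 <= alpha * (s * G) - alpha / c2 * (s * (s * G)).
  have -> : alpha * (s * G) - alpha / c2 * (s * (s * G)) =
            alpha * s * G * ((c2 - s) / c2) by field; rewrite gt_eqF.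
  by rewrite !mulr_ge0.
case: hp => [[-> hT]|[-> hT]].
  have F2 : 0 <= 2 * (eta / (2 * c1)) * (s * T) - eta * T.
    have -> : 2 * (eta / (2 * c1)) * (s * T) - eta * T = eta * T * ((s - c1) / c1)
      by field; rewrite gt_eqF.
    by rewrite mulr_ge0 // mulr_ge0.
  lra.
have F2 : 0 <= 2 * (eta / (2 * c2)) * (s * T) - eta * T.
  have -> : 2 * (eta / (2 * c2)) * (s * T) - eta * T = (- (eta * T)) * ((c2 - s) / c2)
    by field; rewrite gt_eqF.
  by rewrite mulr_ge0 ?oppr_ge0 ?(ltW hT) // mulr_ge0.
lra.
Qed.

Theorem lemma2 (R : realType) (n : nat) (f : 'cV[R]_n -> R) (L m : R)
  (xs : 'cV[R]_n) (mu delta alpha eta c1 c2 : R)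
  (x : int -> 'cV[R]_n) (beta : int -> R) :
  (forall z, differentiable f z) ->
  L_smooth f L -> strongly_convex f m -> 0 < m ->
  grad f xs = 0 ->
  0 < mu < 2 -> 0 < delta -> 0 < alpha -> 0 < eta ->
  0 < c1 -> c1 <= c2 ->
  let y := fun k : int => x k + eta *: (x k - x (k - 1)) in
  let s := fun k : int => beta k * (norm2 (y k - y (k - 1)) + delta) `^ (1 - mu) in
  (forall k, 0 < beta k) ->
  (forall k, c1 <= s k <= c2) ->
  (forall k, x (k + 1) = y k - alpha *: (s k *: grad f (y k))) ->
  forall k : int,
    let u := s k *: grad f (y k) in
    let e := stack3 (x (k - 1) - xs) (x k - xs) (u - 0) in
    let p := psi (dotv (grad f (y k)) (y k - x k)) in
    let a := eta ^+ 2 * m / 2 in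
    let q := alpha ^+ 2 * L / 2 - alpha / c2 in
    let N2 := p *: blk3 (- a) a (- (eta / (2 * c1)))
                         a (- a) (eta / (2 * c1))
                         (- (eta / (2 * c1))) (eta / (2 * c1)) q
            + (1 - p) *: blk3 (- a) a (- (eta / (2 * c2)))
                         a (- a) (eta / (2 * c2))
                         (- (eta / (2 * c2))) (eta / (2 * c2)) q in
    f (x (k + 1)) - f (x k) <= quadf N2 e.
Proof.
move=> df Ls Sc m0 gxs hmu hdel ha he hc1 hc12 y s hb hs upd k.
cbv zeta.
set u := s k *: grad f (y k).
set p := psi (dotv (grad f (y k)) (y k - x k)).
set a := eta ^+ 2 * m / 2.
set q := alpha ^+ 2 * L / 2 - alpha / c2.
rewrite quadfD !quadfZ !quad_sym.
have Ed : (x k - xs) - (x (k - 1) - xs) = x k - x (k - 1) by rewrite opprB addrA subrK.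
rewrite Ed subr0.
set d := x k - x (k - 1).
set g := grad f (y k).
have hD := descent f L (y k) (- (alpha *: u)) df Ls.
have hS := sconv f m (y k) (x k - y k) df Sc.
have Ex : y k + - (alpha *: u) = x (k + 1) by rewrite upd.
have Exk : y k + (x k - y k) = x k by rewrite addrC subrK.
rewrite Ex -/g in hD; rewrite Exk -/g in hS.
have Ew : x k - y k = - (eta *: d) by rewrite /y opprD addrA subrr add0r.
have eDG1 : dotv g (- (alpha *: u)) = - (alpha * (s k * dotv g g)).
  by rewrite /u dotvNr dotvZr dotvZr.
have eDV1 : dotv (- (alpha *: u)) (- (alpha *: u)) = alpha * (alpha * (s k * (s k * dotv g g))).
  by rewrite /u dotvNl dotvNr opprK dotvZl dotvZr dotvZl dotvZr.
have eDW : dotv (x k - y k) (x k - y k) = eta * (eta * dotv d d).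
  by rewrite Ew dotvNl dotvNr opprK dotvZl dotvZr.
have eDG2 : dotv g (x k - y k) = - (eta * dotv g d).
  by rewrite Ew dotvNr dotvZr.
have eDU : dotv d u = s k * dotv g d by rewrite /u dotvZr dotvC.
have eUU : dotv u u = s k * (s k * dotv g g) by rewrite /u dotvZl dotvZr.
have hp : (p = 1 /\ 0 <= eta * dotv g d) \/ (p = 0 /\ eta * dotv g d < 0).
  have Eyx : y k - x k = eta *: d by rewrite /y addrAC subrr add0r.
  rewrite /p -/g Eyx dotvZr /psi; case: ifP => h; [left|right]; split => //.
  by rewrite ltNge h.
have hG : 0 <= dotv g g := dotv_ge0 g.
have [hs1 hs2] := andP (hs k).
have ea : a = eta ^+ 2 * m / 2 by [].
have eq : q = alpha ^+ 2 * L / 2 - alpha / c2 by [].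

have H := arith _ _ _ _ _ _ _ _ _ _ _ _ _ _ _ _ _ _ _ _ _ _ _ ha he hc1 hc12 hs1 hs2 hG ea eq eDU eUU eDG1 eDV1 eDW eDG2 hD hS hp.
exact: H.
Qed.
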